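(* Let $k$ be a field, $\Gamma=(V,E)$ a finite connected quiver, and $I\subseteq R^2$ a two-sided ideal of $k\Gamma$ such that $k\Gamma/I$ is finite dimensional. With $\mathscr{Q}$, $\mathscr{Q}_C$ and $\mathfrak{B}_2$ as in the context, $$\dim_k H^1(k\Gamma,k\Gamma/I)=|\mathfrak{B}_2|+\dim_k Z(k\Gamma/I)-|\mathscr{Q}_C|.$$
   Context: For a path $p$, $t(p),h(p)$ are its start and end vertex; paths multiply by left-to-right concatenation (product $0$ if they do not concatenate). $R$ is the ideal generated by $E$, $\overline{x}=x+I$. A differential operator from $k\Gamma$ to $k\Gamma/I$ is a $k$-linear map with $D(xy)=D(x)\overline{y}+\overline{x}D(y)$; inner ones are those of the form $x\mapsto m\overline{x}-\overline{x}m$, $m\in k\Gamma/I$; $H^1(k\Gamma,k\Gamma/I)$ is the quotient of the space of differential operators by the inner ones. $Z(k\Gamma/I)$ is the center of $k\Gamma/I$. $\mathscr{Q}$ is a fixed $k$-basis of $k\Gamma/I$ consisting of residue classes of paths and containing the classes of all vertices and arrows; for $\overline{s}\in\mathscr{Q}$, $t(\overline{s}),h(\overline{s})$ are the start/end vertex of any representing path (well defined). $\mathscr{Q}_C=\{\overline{q}\in\mathscr{Q}\mid t(\overline{q})=h(\overline{q})\}$. $\mathfrak{B}_2=\{D_{r,\overline{s}}\mid r\in E,\ \overline{s}\in\mathscr{Q},\ t(r)=t(\overline{s}),\ h(r)=h(\overline{s})\}$, where $D_{r,\overline{s}}$ is the unique differential operator $k\Gamma\to k\Gamma/I$ with $D_{r,\overline{s}}(r)=\overline{s}$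 and vanishing on all other arrows and all vertices. *)

(* Defs.v *)
From HB Require Import structures.
From mathcomp Require Import all_boot all_order all_algebra all_field.
From mathcomp Require Import monalg.

Set Implicit Arguments.
Unset Strict Implicit.
Unset Printing Implicit Defensive.

Import GRing.Theory.
Local Open Scope ring_scope.

Section Quiver.

Variables (V E : finType) (t h : E -> V).

Definition quiver_adj : rel V :=
  fun x y => [exists a : E, ((t a == x) && (h a == y)) || ((t a == y) && (h a == x))].

Definition connected_quiver : Prop := forall u v : V, connect quiver_adj u v.

(* (v, s) is a path starting at v with arrow sequence s (left-to-right). *)
Definition is_qpath (x : V * seq E) : bool :=
  if x.2 is a :: s then (t a == x.1) && path (fun a b => h a == t b) a s
  else true.

Definition qpath := {x : V * seq E | is_qpath x}.

Definition qstart (p : qpath) : V := (val p).1.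
Definition qend (p : qpath) : V :=
  if (val p).2 is a :: s then h (last a s) else (val p).1.
Definition qlen (p : qpath) : nat := size (val p).2.

Definition vpath (v : V) : qpath := exist _ (v, [::]) isT.
Lemma arrow_is_qpath (a : E) : is_qpath (t a, [:: a]).
Proof. by rewrite /is_qpath /= eqxx. Qed.
Definition apath (a : E) : qpath := exist _ (t a, [:: a]) (arrow_is_qpath a).

(* concatenation of paths; None stands for the product 0 *)
Definition qconcat (p q : qpath) : option qpath :=
  if qend p == qstart q then insub ((val p).1, (val p).2 ++ (val q).2)
  else None.

Variable k : fieldType.

Definition pathalg := {malg k[qpath]}.

Definition pathel (p : qpath) : pathalg := << p >>.

Definition pmul (x y : pathalg) : pathalg :=
  \sum_(p <- finmap.enum_fset (msupp x)) \sum_(q <- finmap.enum_fset (msupp y))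
     (x@_p * y@_q) *: (if qconcat p q is Some r then pathel r else 0).

Definition pone : pathalg := \sum_(v : V) pathel (vpath v).

Definition is_ideal (I : pathalg -> Prop) : Prop :=
  [/\ I 0,
      (forall x y, I x -> I y -> I (x + y)),
      (forall (a : k) x, I x -> I (a *: x)),
      (forall x y, I y -> I (pmul x y)) &
      (forall x y, I x -> I (pmul x y))].

(* R^2 (R = ideal generated by the arrows) is the span of the paths of
   length >= 2: membership means all coefficients on paths of length < 2
   vanish. *)
Definition inR2 (x : pathalg) : Prop := forall p, (qlen p < 2)%N -> x@_p = 0.

(* pi : k Gamma -> A exhibits A as the quotient algebra k Gamma / I. *)
Definition is_quotient_map (I : pathalg -> Prop) (A : falgType k)
    (pi : pathalg -> A) : Prop :=
  [/\ (forall (a : k) x y, pi (a *: x + y) = a *: pi x + pi y),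
      (forall x y, pi (pmul x y) = pi x * pi y),
      pi pone = 1,
      (forall z : A, exists x, pi x = z) &
      (forall x, pi x = 0 <-> I x)].

Section Derivations.
Variables (A : falgType k) (pi : pathalg -> A).

Definition is_diffop (D : pathalg -> A) : Prop :=
  (forall (a : k) x y, D (a *: x + y) = a *: D x + D y) /\
  (forall x y, D (pmul x y) = D x * pi y + pi x * D y).

Definition is_inner (D : pathalg -> A) : Prop :=
  exists m : A, forall x, D x = m * pi x - pi x * m.

(* dim_k H^1(k Gamma, k Gamma / I) = n : there are n differential operators
   whose classes form a basis of (differential operators) / (inner ones). *)
Definition H1_dim (n : nat) : Prop :=
  exists Ds : 'I_n -> pathalg -> A,
    [/\ (forall i, is_diffop (Ds i)),
        (forall c : 'I_n -> k,
           is_inner (fun x => \sum_i c i *: Ds i x) -> forall i, c i = 0) &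
        (forall D, is_diffop D ->
           exists c : 'I_n -> k,
             is_inner (fun x => D x - \sum_i c i *: Ds i x))].

(* Q given by representing paths; its classes form a basis of A. *)
Definition path_basis (Q : seq qpath) : Prop :=
  [/\ basis_of fullv [seq pi (pathel q) | q <- Q],
      (forall v, exists2 q, q \in Q & pi (pathel q) = pi (pathel (vpath v))) &
      (forall a, exists2 q, q \in Q & pi (pathel q) = pi (pathel (apath a)))].

Definition card_QC (Q : seq qpath) : nat := count (fun q => qstart q == qend q) Q.

(* |B_2| = number of pairs (r, s) with r an arrow, s in Q, t r = t s, h r = h s
   (the operators D_{r,s} are pairwise distinct). *)
Definition card_B2 (Q : seq qpath) : nat :=
  \sum_(r : E) count (fun q => (qstart q == t r) && (qend q == h r)) Q.

End Derivations.

End Quiver.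

(* Main.v *)
Require Import Defs.
From HB Require Import structures.
From mathcomp Require Import all_boot all_order all_algebra all_field.
From mathcomp Require Import monalg finmap.

Set Implicit Arguments.
Unset Strict Implicit.
Unset Printing Implicit Defensive.
Import GRing.Theory.
Local Open Scope ring_scope.


Fact pb_key : unit. Proof. by []. Qed.

Section PathAlg.
Variables (k : fieldType) (V E : finType) (t h : E -> V).
Local Notation P := (pathalg t h k).
Local Notation qp := (qpath t h).
Local Notation pe := (@pathel V E t h k).
Local Notation vp := (vpath t h).
Local Notation ap := (apath t h).

Definition pb : qp -> P := locked_with pb_key pe.
Lemma pbE p : pb p = pe p. Proof. by rewrite /pb unlock. Qed.

Lemma coefpe (p q : qp) : (pe p)@_q = (p == q)%:R.
Proof. exact: mcoeffU. Qed.
Lemma pathelZ (c : k) p : << c *g p >> = c *: pb p :> P.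
Proof. apply/malgP=> q. rewrite pbE [RHS]mcoeffZ [in RHS]coefpe [LHS]mcoeffU.
by case: eqP => _; rewrite ?mulr1 ?mulr0.
Qed.
Lemma msupp_pe p : msupp (pe p) = [fset p]%fset.
Proof. by rewrite /pathel msuppU oner_eq0. Qed.

Lemma pexpand (x : P) : x = \sum_(p <- msupp x) x@_p *: pb p.
Proof. by rewrite {1}[x]monalgE; apply: eq_bigr => p _; rewrite pathelZ. Qed.

Lemma pmul_basis p q : pmul (pb p) (pb q) =
  if qconcat p q is Some r then pathel k r else 0.
Proof.
rewrite pbE pbE.
have := msupp_pe p; have := msupp_pe q; have := coefpe p p; have := coefpe q q.
rewrite /pmul; move: (pe p) (pe q) => x y; rewrite !eqxx => Hy Hx Sy Sx.
by rewrite Sx Sy !big_seq_fset1 Hx Hy mulr1 scale1r.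
Qed.

Lemma pmul_expand (x y : P) : pmul x y =
  \sum_(p <- msupp x) \sum_(q <- msupp y) (x@_p * y@_q) *: pmul (pb p) (pb q).
Proof.
rewrite {1}/pmul; apply: eq_bigr => p _; apply: eq_bigr => q _.
by rewrite pmul_basis.
Qed.

Lemma concat_is_qpath (p q : qp) : qend p == qstart q ->
  is_qpath t h ((val p).1, (val p).2 ++ (val q).2).
Proof.
case: p => [[v s] /= Hp]; case: q => [[w s'] /= Hq].
rewrite /qend /qstart /=.
case: s Hp => [|a s] /= Hp.
  by move/eqP=> ->.
move=> /eqP He; case/andP: Hp => /= Ha Hs.
rewrite /is_qpath /= Ha /= cat_path Hs /=.
case: s' Hq => [|b s'] //= /andP[Hb ->]; by rewrite andbT He eq_sym.
Qed.

Definition qcat p q (H : qend p == qstart q) : qp := exist (is_qpath t h) _ (concat_is_qpath H).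

Lemma pmul_cat p q (H : qend p == qstart q) : pmul (pb p) (pb q) = pb (qcat H).
Proof. by rewrite pmul_basis /qconcat H (insubT _ (concat_is_qpath H)) pbE. Qed.

Lemma pmul_ncat p q : qend p != qstart q -> pmul (pb p) (pb q) = 0.
Proof. by rewrite pmul_basis /qconcat => /negPf ->. Qed.

Lemma vp_eq (p : qp) : (val p).2 = [::] -> p = vp (val p).1.
Proof. by case: p => [[a b] Hp] /= H; apply/val_inj => /=; rewrite H. Qed.

Lemma pmul_vl v p : pmul (pb (vp v)) (pb p) = if v == qstart p then pb p else 0.
Proof.
case: eqP => [Hv|/eqP Hv]; last by rewrite pmul_ncat.
have H : qend (vp v) == qstart p by rewrite Hv.
rewrite (pmul_cat H); congr pb; apply/val_inj => /=.
by rewrite Hv; case: p {H Hv} => [[a b]].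
Qed.

Lemma pmul_vr v p : pmul (pb p) (pb (vp v)) = if qend p == v then pb p else 0.
Proof.
case: eqP => [Hv|/eqP Hv]; last by rewrite pmul_ncat.
have H : qend p == qstart (vp v) by rewrite Hv.
rewrite (pmul_cat H); congr pb; apply/val_inj => /=.
by rewrite cats0; case: p {H Hv} => [[a b]].
Qed.

Lemma rest_is_qpath (p : qp) a s : (val p).2 = a :: s -> is_qpath t h (h a, s).
Proof.
case: p => [[v s0] /= Hp] Hs; move: Hp; rewrite Hs /= => /andP[_].
by case: s {Hs} => [|b s'] //= /andP[He Hp]; rewrite /is_qpath /= eq_sym He Hp.
Qed.

Lemma pmul_decomp (p : qp) a s (Hs : (val p).2 = a :: s) :
  pb p = pmul (pb (ap a)) (pb (exist (is_qpath t h) _ (rest_is_qpath Hs))).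
Proof.
have H : qend (ap a) == qstart (exist (is_qpath t h) _ (rest_is_qpath Hs)) by [].
rewrite (pmul_cat H); congr pb; apply/val_inj => /=.
case: p Hs {H} => [[v s0] /= Hp] Hs; move: Hp; rewrite Hs /= => /andP[/eqP -> _].
by [].
Qed.

Lemma qend_rest (p : qp) a s (Hs : (val p).2 = a :: s) :
  qend (exist (is_qpath t h) _ (rest_is_qpath Hs)) = qend p.
Proof. by rewrite /qend /= Hs; case: s Hs. Qed.

Lemma qstart_cat p q (H : qend p == qstart q) : qstart (qcat H) = qstart p.
Proof. by []. Qed.

Variables (A : falgType k) (pi : P -> A).
Hypothesis pilin : forall (a : k) x y, pi (a *: x + y) = a *: pi x + pi y.
Hypothesis pimul : forall x y, pi (pmul x y) = pi x * pi y.
Hypothesis pione : pi (pone t h k) = 1.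

Definition islin (L : P -> A) := forall (a : k) x y, L (a *: x + y) = a *: L x + L y.

Section Lin.
Variables (L : P -> A) (HL : islin L).
Lemma lin0 : L 0 = 0.
Proof. have H := HL 1 0 0; rewrite scaler0 addr0 scale1r in H. by apply: (addrI (L 0)); rewrite addr0 -H. Qed.
Lemma linD x y : L (x + y) = L x + L y.
Proof. by rewrite -[x in LHS]scale1r HL scale1r. Qed.
Lemma linZ a x : L (a *: x) = a *: L x.
Proof. by rewrite -[a *: x]addr0 HL lin0 addr0. Qed.
Lemma lin_sum (I : Type) (r : seq I) (F : I -> P) :
  L (\sum_(i <- r) F i) = \sum_(i <- r) L (F i).
Proof. exact: (big_morph L linD lin0). Qed.
Lemma lin_expand x : L x = \sum_(p <- msupp x) x@_p *: L (pb p).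
Proof. by rewrite {1}(pexpand x) lin_sum; apply: eq_bigr => p _; rewrite linZ. Qed.
End Lin.

Lemma leibniz_basis (L : P -> A) : islin L ->
  (forall p q, L (pmul (pb p) (pb q)) = L (pb p) * pi (pb q) + pi (pb p) * L (pb q)) ->
  forall x y, L (pmul x y) = L x * pi y + pi x * L y.
Proof.
move=> HL Hb x y.
rewrite pmul_expand (lin_sum HL).
under eq_bigr do rewrite (lin_sum HL).
under eq_bigr do under eq_bigr do rewrite (linZ HL) Hb.
rewrite (lin_expand HL x) (lin_expand pilin y) (lin_expand pilin x) (lin_expand HL y).
rewrite !mulr_suml -big_split /=; apply: eq_bigr => p _.
rewrite !mulr_sumr -big_split /=; apply: eq_bigr => q _.
by rewrite scalerDr -!scalerAl -!scalerAr !scalerA.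
Qed.

Definition eps v := pi (pb (vp v)).
Definition alp a := pi (pb (ap a)).
Definition pip p := pi (pb p).

Lemma pi0 : pi 0 = 0. Proof. exact: lin0. Qed.

Lemma eps_l v p : eps v * pip p = if v == qstart p then pip p else 0.
Proof. by rewrite /eps /pip -pimul pmul_vl; case: eqP; rewrite ?pi0. Qed.
Lemma eps_r v p : pip p * eps v = if qend p == v then pip p else 0.
Proof. by rewrite /eps /pip -pimul pmul_vr; case: eqP; rewrite ?pi0. Qed.
Lemma eps_mul v w : eps v * eps w = if v == w then eps v else 0.
Proof. by rewrite {1}/eps -/(pip (vp v)) eps_r /=. Qed.
Lemma epsK v : eps v * eps v = eps v.
Proof. by rewrite eps_mul eqxx. Qed.
Lemma alp_l a : eps (t a) * alp a = alp a.
Proof. by rewrite /alp -/(pip _) eps_l eqxx. Qed.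
Lemma alp_r a : alp a * eps (h a) = alp a.
Proof. by rewrite /alp -/(pip _) eps_r eqxx. Qed.
Lemma sum_eps : \sum_v eps v = 1.
Proof.
rewrite -pione /pone (lin_sum pilin); apply: eq_bigr => v _.
by rewrite /eps pbE.
Qed.

Definition Ps (s : seq E) := \prod_(a <- s) alp a.
Fixpoint Dsq (g : E -> A) (s : seq E) : A :=
  if s is a :: s' then g a * Ps s' + alp a * Dsq g s' else 0.

Lemma Ps_cat s s' : Ps (s ++ s') = Ps s * Ps s'.
Proof. by rewrite /Ps big_cat. Qed.
Lemma Ps_cons a s : Ps (a :: s) = alp a * Ps s.
Proof. by rewrite /Ps big_cons. Qed.

Lemma Dsq_cat g s s' : Dsq g (s ++ s') = Dsq g s * Ps s' + Ps s * Dsq g s'.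
Proof.
elim: s => [|a s IH] /=; first by rewrite /Ps big_nil mul0r add0r mul1r.
rewrite IH Ps_cat Ps_cons mulrDr mulrDl !mulrA addrA.
by [].
Qed.

Lemma qstart_t (p : qp) a s : (val p).2 = a :: s -> qstart p = t a.
Proof.
case: p => [[v s0] Hp] /= Hs; rewrite /qstart /=; move: Hp.
by rewrite /is_qpath /= Hs => /andP[/eqP ->].
Qed.

Lemma pip_Ps (p : qp) : pip p = eps (qstart p) * Ps (val p).2.
Proof.
move Hs: (val p).2 => s; elim: s p Hs => [|a s IH] p Hs.
  by rewrite (vp_eq Hs) /Ps big_nil mulr1.
rewrite /pip (pmul_decomp Hs) pimul -/(alp a) -/(pip _) IH //=.
rewrite Ps_cons (qstart_t Hs) [RHS]mulrA alp_l /qstart /=.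
by rewrite mulrA alp_r.
Qed.

Lemma pip_end (p : qp) : pip p * eps (qend p) = pip p.
Proof. by rewrite eps_r eqxx. Qed.

Definition gr (g : E -> A) a := eps (t a) * g a * eps (h a).

Lemma Dsq_end g (p : qp) :
  eps (qstart p) * Dsq (gr g) (val p).2 * eps (qend p) =
  eps (qstart p) * Dsq (gr g) (val p).2.
Proof.
move Hs: (val p).2 => s; elim: s p Hs => [|a s IH] p Hs /=; first by rewrite mulr0 mul0r.
set r := exist (is_qpath t h) _ (rest_is_qpath Hs).
have IH' := IH r erefl.
have Hqr : qstart r = h a by [].
rewrite Hqr in IH'; rewrite -(qend_rest Hs) -/r.
rewrite -!mulrA; congr (_ * _).
rewrite mulrDl; congr (_ + _).
  have Hr := pip_end r; rewrite pip_Ps Hqr -mulrA in Hr.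
  by rewrite /gr -!mulrA Hr.
rewrite -[alp a]alp_r -!mulrA [eps (h a) * (_ * _)]mulrA IH'.
by [].
Qed.

Definition Dpath g (p : qp) := eps (qstart p) * Dsq (gr g) (val p).2.

Lemma Dpath_cat g p q (H : qend p == qstart q) :
  Dpath g (qcat H) = Dpath g p * pip q + pip p * Dpath g q.
Proof.
have E1 := Dsq_end g p; have E2 := pip_end p; rewrite pip_Ps in E2.
rewrite /Dpath /= Dsq_cat mulrDr !mulrA (pip_Ps p) (pip_Ps q) qstart_cat -(eqP H).
rewrite /= in E1 E2 *.
congr (_ + _); first by rewrite mulrA E1.
by rewrite E2.
Qed.

Lemma Dpath_ncat g p q : qend p != qstart q ->
  Dpath g p * pip q + pip p * Dpath g q = 0.
Proof.
move=> H.
have E1 := Dsq_end g p; have E2 := pip_end p.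
rewrite /Dpath (pip_Ps q) -E1 -E2 /Dpath (pip_Ps p).
by rewrite !mulrA -!(mulrA _ (eps (qend p)) (eps (qstart q))) eps_mul (negPf H) !mulr0 !mul0r addr0.
Qed.

Definition Theta g (x : P) : A := mmap (in_alg A) (Dpath g) x.

Lemma ThetaZ g a x : Theta g (a *: x) = a *: Theta g x.
Proof.
rewrite /Theta (mmapEw (msuppZ_le a x)) mmapE scaler_sumr; apply: eq_bigr => p _.
by rewrite mcoeffZ /= !mulr_algl scalerA.
Qed.

Lemma Theta_lin g : islin (Theta g).
Proof. by move=> a x y; rewrite /Theta mmapD; congr (_ + _); exact: ThetaZ. Qed.

Lemma Theta_pb g p : Theta g (pb p) = Dpath g p.
Proof. by rewrite pbE /Theta /pathel mmapU /= mulr_algl scale1r. Qed.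

Lemma Theta_diffop g : is_diffop pi (Theta g).
Proof.
split; first exact: Theta_lin.
apply: leibniz_basis; first exact: Theta_lin.
move=> p q; rewrite !Theta_pb -!/(pip _).
case: (boolP (qend p == qstart q)) => H.
  by rewrite (pmul_cat H) Theta_pb Dpath_cat.
by rewrite (pmul_ncat H) (lin0 (Theta_lin g)) Dpath_ncat.
Qed.

Lemma Theta_v g v : Theta g (pb (vp v)) = 0.
Proof. by rewrite Theta_pb /Dpath /= mulr0. Qed.

Lemma Theta_a g a : Theta g (pb (ap a)) = gr g a.
Proof.
rewrite Theta_pb /Dpath /= mulr0 addr0 /Ps big_nil mulr1 /gr /qstart /=.
by rewrite !mulrA epsK.
Qed.

Lemma diffop_zero D : is_diffop pi D -> (forall v, D (pb (vp v)) = 0) ->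
  (forall a, D (pb (ap a)) = 0) -> forall x, D x = 0.
Proof.
case=> HL HD Hv Ha.
have Hp : forall p, D (pb p) = 0.
  move=> p; move Hs: (val p).2 => s; elim: s p Hs => [|a s IH] p Hs.
    by rewrite (vp_eq Hs) Hv.
  by rewrite (pmul_decomp Hs) HD Ha IH // mul0r mulr0 addr0.
by move=> x; rewrite (lin_expand HL) big1 // => p _; rewrite Hp scaler0.
Qed.

Lemma linfunE' (U W : vectType k) (f : U -> W) :
  linear f -> forall x, linfun f x = f x.
Proof.
move=> Hf x.
pose F : {linear U -> W} := HB.pack f (GRing.isLinear.Build _ _ _ _ f Hf).
exact: (lfunE F x).
Qed.

Hypothesis pisurj : forall z : A, exists x, pi x = z.
Variable (Q : seq qp).
Hypothesis HQ : basis_of fullv [seq pip q | q <- Q].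

Lemma spanQ : <<[seq pip q | q <- Q]>>%VS = fullv.
Proof. by case/andP: HQ => /eqP. Qed.

Lemma sandwich q v w : eps v * pip q * eps w =
  if (qstart q == v) && (qend q == w) then pip q else 0.
Proof.
rewrite eps_l eq_sym; case: (qstart q == v); last by rewrite mul0r.
by rewrite eps_r.
Qed.

Definition blk v w := [seq pip q | q <- Q & (qstart q == v) && (qend q == w)].

Lemma sw_lin v w : linear (fun m : A => eps v * m * eps w).
Proof. by move=> a x y; rewrite mulrDr mulrDl -scalerAr -scalerAl. Qed.

Lemma blk_mem m v w : eps v * m * eps w \in <<blk v w>>%VS.
Proof.
pose f := linfun (fun m : A => eps v * m * eps w).
have fE := linfunE' (sw_lin v w).
have : (fullv <= f @^-1: <<blk v w>>)%VS.
  rewrite -spanQ; apply/span_subvP => x /mapP[q Hq ->].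
  rewrite -memv_preim fE sandwich; case: ifP => Hc; last exact: mem0v.
  by apply: memv_span; apply: map_f; rewrite mem_filter Hc.
by move/subvP/(_ m (memvf m)); rewrite -memv_preim fE.
Qed.

Lemma blk_fix y v w : y \in <<blk v w>>%VS -> eps v * y * eps w = y.
Proof.
have Hl : linear (fun m : A => eps v * m * eps w - m).
  by move=> a x z; rewrite sw_lin scalerBr opprD addrACA.
pose f := linfun (fun m : A => eps v * m * eps w - m).
have fE := linfunE' Hl.
have : (<<blk v w>> <= lker f)%VS.
  apply/span_subvP => x /mapP[q]; rewrite mem_filter => /andP[Hc _] ->.
  by rewrite memv_ker fE sandwich Hc subrr.
move/subvP => H /H; rewrite memv_ker fE subr_eq0 => /eqP.
by [].
Qed.

Lemma free_sub (Pr : pred qp) : free [seq pip q | q <- Q & Pr q].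
Proof.
have Hf := basis_free HQ.
have Hp : perm_eq [seq pip q | q <- Q]
   ([seq pip q | q <- Q & Pr q] ++ [seq pip q | q <- Q & predC Pr q]).
  by rewrite -map_cat perm_map // perm_sym perm_filterC.
by move: Hf; rewrite (perm_free Hp) => /catl_free.
Qed.

Lemma dim_sub (Pr : pred qp) : \dim <<[seq pip q | q <- Q & Pr q]>> = count Pr Q.
Proof. by have := free_sub Pr; rewrite /free size_map size_filter => /eqP. Qed.

Definition QC := [seq pip q | q <- Q & qstart q == qend q].
Definition Csp := <<QC>>%VS.

Lemma dimC : \dim Csp = card_QC Q.
Proof. exact: dim_sub. Qed.

Lemma C_comm m : m \in Csp -> forall v, m * eps v = eps v * m.
Proof.
move=> Hm v; apply/cent1vP; move: m Hm; apply/subvP/span_subvP.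
move=> x /mapP[q]; rewrite mem_filter => /andP[/eqP Hq _] ->; apply/cent1vP.
by rewrite eps_l eps_r Hq eq_sym.
Qed.

Lemma comm_C m : (forall v, m * eps v = eps v * m) -> m \in Csp.
Proof.
move=> Hm.
have -> : m = \sum_v eps v * m * eps v.
  rewrite -[LHS]mulr1 -sum_eps mulr_sumr; apply: eq_bigr => v _.
  by rewrite -Hm -mulrA epsK.
apply: memv_suml => v _.
apply: (subvP (sub_span _)); last exact: blk_mem.
move=> x /mapP[q]; rewrite mem_filter => /andP[/andP[/eqP H1 /eqP H2] Hq] ->.
by apply: map_f; rewrite mem_filter H1 H2 eqxx Hq.
Qed.

Local Notation X := {ffun E -> A}.

Definition adf (m : A) : X := [ffun a => m * alp a - alp a * m].
Lemma adf_lin : linear adf.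
Proof.
move=> c x y; apply/ffunP => a; rewrite !ffunE.
rewrite mulrDl mulrDr -scalerAl -scalerAr.
by rewrite scalerBr opprD addrACA.
Qed.
Definition adL := linfun adf.
Lemma adLE m : adL m = adf m. Proof. apply: linfunE'; exact: adf_lin. Qed.

Lemma ad_diffop m : is_diffop pi (fun x => m * pi x - pi x * m).
Proof.
split.
  move=> a x y; rewrite pilin mulrDr mulrDl -scalerAl -scalerAr.
  by rewrite scalerBr opprD addrACA.
move=> x y; rewrite pimul !mulrBl !mulrBr !mulrA.
by rewrite addrA subrK.
Qed.

Lemma kerC : (Csp :&: lker adL)%VS = 'Z(fullv)%VS.
Proof.
apply/vspaceP => m; rewrite memv_cap memv_ker adLE.
apply/idP/idP.
  case/andP => HC /eqP Ha.
  have H0 := diffop_zero (ad_diffop m).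
  have Hz : forall x, m * pi x - pi x * m = 0.
    apply: H0.
      by move=> v; apply/eqP; rewrite subr_eq0; apply/eqP; exact: C_comm.
    move=> a; have := congr1 (fun f : X => f a) Ha.
    by rewrite /adf ffunE ffunE.
  rewrite memv_cap memvf /=; apply/centvP => z _.
  by have [x <-] := pisurj z; apply/eqP; rewrite -subr_eq0 Hz.
rewrite memv_cap => /andP[_ /centvP Hc].
have Hc' : forall z, m * z = z * m by move=> z; apply: Hc; exact: memvf.
rewrite comm_C //=; apply/eqP/ffunP => a.
by rewrite !ffunE Hc' subrr.
Qed.

Definition Usp := (adL @: Csp)%VS.

Lemma dimU : (\dim Usp + \dim 'Z(fullv : {vspace A}))%N = card_QC Q.
Proof. by rewrite -dimC -(limg_ker_dim adL Csp) kerC addnC. Qed.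

Definition emb (r : E) (y : A) : X := [ffun a => if a == r then y else 0].
Lemma emb_lin r : linear (emb r).
Proof.
move=> c x y; apply/ffunP => a; rewrite !ffunE.
by case: eqP => _; rewrite ?scaler0 ?addr0.
Qed.
Definition embL r := linfun (emb r).
Lemma embLE r y : embL r y = emb r y. Proof. apply: linfunE'; exact: emb_lin. Qed.

Definition Xs r := [seq embL r y | y <- blk (t r) (h r)].
Definition Wlist := \big[cat/[::]]_(r : E) Xs r.
Definition Wsp := <<Wlist>>%VS.

Lemma Xs_span r : <<Xs r>>%VS = (embL r @: <<blk (t r) (h r)>>)%VS.
Proof. by rewrite limg_span. Qed.

Lemma Xs_mem u r : u \in <<Xs r>>%VS -> u = emb r (u r) /\ u r \in <<blk (t r) (h r)>>%VS.
Proof.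
rewrite Xs_span => /memv_imgP[y Hy ->].
have E1 : (emb r y) r = y by rewrite ffunE eqxx.
by rewrite embLE E1.
Qed.

Lemma Wsp_sum : Wsp = (\sum_(r : E) <<Xs r>>)%VS.
Proof. exact: span_bigcat. Qed.

Lemma W_decomp w : w \in Wsp -> forall a, w a \in <<blk (t a) (h a)>>%VS.
Proof.
rewrite Wsp_sum => /memv_sumP[vs Hvs ->] a.
rewrite sum_ffunE (bigD1 a) //= big1 ?addr0.
  by case: (Xs_mem (Hvs a isT)).
move=> r Hr; have [-> _] := Xs_mem (Hvs r isT).
by rewrite ffunE eq_sym (negPf Hr).
Qed.

Lemma W_fix w : w \in Wsp -> forall a, gr w a = w a.
Proof. by move=> Hw a; rewrite /gr; apply: blk_fix; apply: W_decomp. Qed.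

Lemma grW g : [ffun a => gr g a] \in Wsp.
Proof.
rewrite Wsp_sum.
have -> : [ffun a => gr g a] = \sum_r emb r (gr g r).
  apply/ffunP => a; rewrite sum_ffunE ffunE (bigD1 a) //= big1 ?addr0.
    by rewrite ffunE eqxx.
  by move=> r Hr; rewrite ffunE eq_sym (negPf Hr).
apply: memv_sumr => r _; rewrite Xs_span -embLE; apply: memv_img.
exact: blk_mem.
Qed.

Lemma Xs_free r : free (Xs r).
Proof.
have Hf := free_sub (fun q => (qstart q == t r) && (qend q == h r)).
rewrite /free Xs_span size_map limg_dim_eq //.
apply/eqP; rewrite -subv0; apply/subvP => y.
rewrite memv_cap memv_ker memv0 embLE => /andP[_ /eqP H].
by have := congr1 (fun f : X => f r) H; rewrite !ffunE eqxx => ->.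
Qed.

Lemma dimW : \dim Wsp = card_B2 Q.
Proof.
have Hf : free Wlist.
  apply: bigcat_free; last by move=> r _; exact: Xs_free.
  apply/directv_sum_independent => us Hus Hsum r _.
  apply/ffunP => a.
  have Ha := congr1 (fun f : X => f a) Hsum; rewrite /= sum_ffunE ffunE in Ha.
  rewrite (bigD1 a) //= big1 ?addr0 in Ha; last first.
    move=> r' Hr'; have [-> _] := Xs_mem (Hus r' isT).
    by rewrite ffunE eq_sym (negPf Hr').
  rewrite ffunE; case: (eqVneq a r) => [<- //|Har].
  have [-> _] := Xs_mem (Hus r isT).
  by rewrite ffunE (negPf Har).
rewrite /Wsp (eqP Hf) /Wlist (big_morph size (@size_cat _) (erefl _)).
by apply: eq_bigr => r _; rewrite size_map size_map size_filter.
Qed.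

Lemma U_sub : (Usp <= Wsp)%VS.
Proof.
apply/subvP => u /memv_imgP[m Hm ->]; rewrite adLE.
have H1 := C_comm Hm.
have -> : adf m = [ffun a => gr (adf m) a].
  apply/ffunP => a; rewrite !ffunE /gr ffunE mulrBr mulrBl.
  have E1 : eps (t a) * (m * alp a) * eps (h a) = m * alp a.
    by rewrite mulrA -H1 -(mulrA m) alp_l -(mulrA m) alp_r.
  have E2 : eps (t a) * (alp a * m) * eps (h a) = alp a * m.
    by rewrite (mulrA (eps (t a))) alp_l -(mulrA (alp a)) H1 mulrA alp_r.
  by rewrite E1 E2.
exact: grW.
Qed.

Lemma diffop_sub D1 D2 : is_diffop pi D1 -> is_diffop pi D2 ->
  is_diffop pi (fun x => D1 x - D2 x).
Proof.
case=> L1 M1 [L2 M2]; split.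
  by move=> a x y; rewrite L1 L2 scalerBr opprD addrACA.
by move=> x y; rewrite M1 M2 mulrBl mulrBr opprD addrACA.
Qed.

Lemma diffop_sum n (Ds : 'I_n -> P -> A) (c : 'I_n -> k) :
  (forall i, is_diffop pi (Ds i)) -> is_diffop pi (fun x => \sum_i c i *: Ds i x).
Proof.
move=> HDs; split.
  move=> a x y; rewrite scaler_sumr -big_split /=; apply: eq_bigr => i _.
  by case: (HDs i) => L _; rewrite L scalerDr !scalerA mulrC.
move=> x y; rewrite mulr_suml mulr_sumr -big_split /=; apply: eq_bigr => i _.
by case: (HDs i) => _ M; rewrite M scalerDr scalerAl scalerAr.
Qed.

Lemma rearr (Z : zmodType) (a b c s : Z) : a - b - c - s = 0 -> a - s = b + c.
Proof.
move/eqP; rewrite !subr_eq add0r => /eqP ->.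
by rewrite addrAC [s + c - s]addrAC subrr add0r addrC.
Qed.

Lemma main_sec : exists n : nat, H1_dim pi n /\
    (n + card_QC Q = card_B2 Q + \dim ('Z(fullv : {vspace A}))%VS)%N.
Proof.
set S := (Wsp :\: Usp)%VS.
pose bvec (i : 'I_(\dim S)) : X := (vbasis S)`_i.
pose Ds i := Theta (fun a => bvec i a).
have HbS : forall i, bvec i \in S.
  by move=> i; apply: vbasis_mem; apply: mem_nth; rewrite size_tuple.
have HbW : forall i, bvec i \in Wsp.
  by move=> i; apply: (subvP (diffvSl Wsp Usp)).
have HDs : forall i, is_diffop pi (Ds i) by move=> i; exact: Theta_diffop.
have DsA : forall i a, Ds i (pb (ap a)) = bvec i a.
  by move=> i a; rewrite /Ds Theta_a W_fix.
have DsV : forall i v, Ds i (pb (vp v)) = 0.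
  by move=> i v; rewrite /Ds Theta_v.
exists (\dim S); split; last first.
  have := dimv_cap_compl Wsp Usp; rewrite (capv_idPr U_sub) dimW -/S => H.
  by rewrite -dimU addnA [(\dim S + _)%N]addnC H.
exists Ds; split.
- exact: HDs.
- move=> c [m Hm].
  have Hv : forall v, m * eps v = eps v * m.
    move=> v; have := Hm (pb (vp v)); rewrite big1 => [H|j _]; last by rewrite DsV scaler0.
    by apply/eqP; rewrite -subr_eq0 -H.
  have HC := comm_C Hv.
  have Heq : adL m = \sum_j c j *: bvec j.
    apply/ffunP => a; rewrite adLE ffunE sum_ffunE.
    have := Hm (pb (ap a)); rewrite -/(alp a) => <-.
    by apply: eq_bigr => j _; rewrite DsA ffunE.
  have H0 : \sum_j c j *: bvec j \in (S :&: Usp)%VS.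
    rewrite memv_cap; apply/andP; split.
      by apply: memv_suml => j _; apply: memvZ.
    by rewrite -Heq; apply: memv_img.
  rewrite capv_diff memv0 in H0.
  have := basis_free (vbasisP S); move/freeP => Hfree.
  exact: Hfree (eqP H0).
- move=> D [HL HD].
  pose d v := D (pb (vp v)).
  pose m0 := - \sum_v eps v * d v.
  have Hd : forall v w, d v * eps w + eps v * d w = if v == w then d v else 0.
    move=> v w; rewrite /d /eps -HD pmul_vl /=.
    by case: eqP => [-> //|_]; exact: lin0 HL.
  have Hm0 : forall w, m0 * eps w - eps w * m0 = d w.
    move=> w; rewrite /m0 mulNr mulrN opprK mulr_suml mulr_sumr.
    have S1 : \sum_v eps v * d v * eps w = eps w * d w - d w.
      transitivity (\sum_v ((if v == w then eps v * d v else 0) - eps v * d w)).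
        apply: eq_bigr => v _; rewrite -mulrA.
        have -> : d v * eps w = (if v == w then d v else 0) - eps v * d w.
          by rewrite -Hd addrK.
        rewrite mulrBr mulrA epsK.
        by case: eqP => _; rewrite ?mulr0.
      rewrite sumrB -mulr_suml sum_eps mul1r (bigD1 w) //= eqxx big1 ?addr0 //.
      by move=> v /negPf ->.
    have S2 : \sum_v eps w * (eps v * d v) = eps w * d w.
      rewrite (bigD1 w) //= mulrA epsK big1 ?addr0 //.
      by move=> v Hv; rewrite mulrA eps_mul eq_sym (negPf Hv) mul0r.
    by rewrite S1 S2 opprB subrK.
  pose D1 := fun x => D x - (m0 * pi x - pi x * m0).
  have HD1 : is_diffop pi D1 := diffop_sub (conj HL HD) (ad_diffop m0).
  have HD1v : forall v, D1 (pb (vp v)) = 0.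
    by move=> v; rewrite /D1 -/(eps v) Hm0 subrr.
  have HD1a : forall a, eps (t a) * D1 (pb (ap a)) * eps (h a) = D1 (pb (ap a)).
    move=> a.
    have El : pb (ap a) = pmul (pb (vp (t a))) (pb (ap a)) by rewrite pmul_vl eqxx.
    have Er : pb (ap a) = pmul (pb (ap a)) (pb (vp (h a))) by rewrite pmul_vr eqxx.
    have L1 : D1 (pb (ap a)) = eps (t a) * D1 (pb (ap a)).
      by rewrite {1}El (proj2 HD1) HD1v mul0r add0r.
    have L2 : D1 (pb (ap a)) = D1 (pb (ap a)) * eps (h a).
      by rewrite {1}Er (proj2 HD1) HD1v mulr0 addr0.
    by rewrite -L1 -L2.
  pose g : X := [ffun a => D1 (pb (ap a))].
  have Hg : g \in Wsp.
    have -> : g = [ffun a => gr g a].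
      by apply/ffunP => a; rewrite !ffunE /gr ffunE HD1a.
    exact: grW.
  move: Hg; rewrite -(addv_diff_cap Wsp Usp) (capv_idPr U_sub) -/S.
  case/memv_addP => w1 Hw1 [u Hu Hgu].
  case/memv_imgP: Hu => m1 Hm1 Hu.
  pose c i := coord (vbasis S) i w1.
  exists c; exists (m0 + m1) => x.
  pose D2 := fun x => D1 x - (m1 * pi x - pi x * m1) - \sum_i c i *: Ds i x.
  have HD2 : is_diffop pi D2.
    apply: diffop_sub; first exact: diffop_sub HD1 (ad_diffop m1).
    exact: diffop_sum.
  have Z := diffop_zero HD2.
  have Hw1e : forall a, \sum_i c i *: Ds i (pb (ap a)) = w1 a.
    move=> a; rewrite [in RHS](coord_vbasis Hw1) sum_ffunE.
    by apply: eq_bigr => i _; rewrite DsA ffunE.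
  have Z0 : D2 x = 0.
    apply: Z => [v|a].
      rewrite /D2 HD1v -/(eps v) (C_comm Hm1) subrr subr0 sub0r big1 ?oppr0 //.
      by move=> i _; rewrite DsV scaler0.
    rewrite /D2 Hw1e -/(alp a).
    have -> : D1 (pb (ap a)) = g a by rewrite ffunE.
    by rewrite Hgu Hu adLE !ffunE addrK subrr.
  rewrite /D2 /D1 in Z0.
  have Hr := rearr Z0.
  by rewrite Hr mulrDl mulrDr opprD addrACA.
Qed.
End PathAlg.



Theorem proposition3p4 (k : fieldType) (V E : finType) (t h : E -> V)
  (Hconn : connected_quiver t h)
  (I : pathalg t h k -> Prop) (HI : is_ideal I) (HIR2 : forall x, I x -> inR2 x)
  (A : falgType k) (pi : pathalg t h k -> A) (Hpi : is_quotient_map I pi)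
  (Q : seq (qpath t h)) (HQ : path_basis pi Q) :
  exists n : nat, H1_dim pi n /\
    (n + card_QC Q = card_B2 Q + \dim ('Z(fullv : {vspace A}))%VS)%N.
Proof.
case: Hpi => Hlin Hmul Hone Hsurj _.
case: HQ => HB _ _.
have HB' : basis_of fullv [seq pip pi q | q <- Q].
  suff -> : [seq pip pi q | q <- Q] = [seq pi (pathel k q) | q <- Q] by [].
  by apply: eq_map => q; rewrite /pip pbE.
exact: (main_sec Hlin Hmul Hone Hsurj HB').
Qed.
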